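(* Let $h\ge1$, $P(u)=u^{-h}+\dots+u^{-1}+u+\dots+u^h$, and let $U(z)$ be the root of $1-z^hP(U)=0$ whose expansion at $0$ begins $U(z)=z+\cdots$. Then $U(z)$ is a power series in $z$ (not a genuine Puiseux series); for every integer $m\ge1$, $$U^m(z)=\sum_{n\ge1}\frac mn\binom{n/h}{n-m}^{*}_{2h}z^n;$$ and, with $\omega=e^{2\pi\mathrm{i}/h}$, the small roots $u_i(z)$ and large roots $v_i(z)$ of $1-zP(u)=0$ are $u_i(z)=U(\omega^{i-1}z^{1/h})$ and $v_i(z)=1/U(\omega^{i-1}z^{1/h})$ for $i=1,\dots,h$.
   Context: Small roots of $1-zP(u)=0$ are the roots (Puiseux series in $z$) tending to $0$ as $z\to0$; large roots are those with $|v(z)|\to\infty$ as $z\to0$. For real $\alpha$ and integer $k$, $\binom{\alpha}{k}^{*}_{2h}:=[u^k](1+u+\dots+u^{h-1}+u^{h+1}+\dots+u^{2h})^{\alpha}$, the power being the formal power series with constant term $1$ (value $0$ for $k<0$). *)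

(* Defs.v *)
From mathcomp Require Import all_boot all_order all_algebra algC.
Set Implicit Arguments. Unset Strict Implicit. Unset Printing Implicit Defensive.
Import Order.TTheory GRing.Theory Num.Theory.
Local Open Scope ring_scope.

(* Formal power series in one variable s over algC: coefficient sequences. *)
Definition fps := nat -> algC.

Definition fps_zero : fps := fun _ => 0.
Definition fps_add (f g : fps) : fps := fun n => f n + g n.
Definition fps_mul (f g : fps) : fps :=
  fun n => \sum_(i < n.+1) f i * g (n - i)%N.
Definition fps_Xn (k : nat) : fps := fun n => (n == k)%:R.
Definition fps_pow (f : fps) (m : nat) : fps := iter m (fps_mul f) (fps_Xn 0).
Definition fps_sum (s : seq fps) : fps := foldr fps_add fps_zero s.

(* fps_subst c d f = f(c * s^d) (d >= 1) *)
Definition fps_subst (c : algC) (d : nat) (f : fps) : fps :=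
  fun n => if (d %| n)%N then c ^+ (n %/ d) * f (n %/ d)%N else 0.

(* Exponents of Phi_h(u) = 1 + u + ... + u^(h-1) + u^(h+1) + ... + u^(2h)
   = u^h P(u). *)
Definition Phi_idx (h : nat) : seq nat := [seq j <- iota 0 (2 * h).+1 | j != h].

Definition Phi (h : nat) : fps := fun n => ((n <= 2 * h)%N && (n != h))%:R.

Definition gbinom (alpha : algC) (j : nat) : algC :=
  (\prod_(i < j) (alpha - i%:R)) / (j`!)%:R.

(* [u^k] Phi(u)^alpha, where Phi^alpha := sum_j binom(alpha,j) (Phi-1)^j
   (the formal power series with constant term 1). *)
Definition binom_star (h : nat) (alpha : algC) (k : int) : algC :=
  match k with
  | Posz k => \sum_(j < k.+1)
       gbinom alpha j * fps_pow (fps_add (Phi h) (fun n => - fps_Xn 0 n)) j k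
  | Negz _ => 0
  end.

(* The Laurent series u = s^(-k) * g is a root of  u^h - s^N * Phi_h(u) = 0,
   i.e. (since u <> 0 and u^h P(u) = Phi_h(u)) of  1 - s^N P(u) = 0.
   The equation is multiplied by s^(2hk) to clear denominators. *)
Definition laurent_root (h N k : nat) (g : fps) : Prop :=
  fps_mul (fps_Xn (h * k)) (fps_pow g h) =
  fps_mul (fps_Xn N)
    (fps_sum [seq fps_mul (fps_Xn ((2 * h - j) * k)) (fps_pow g j) | j <- Phi_idx h]).

(* s^(-k) g tends to 0 (positive valuation) *)
Definition laurent_small (k : nat) (g : fps) : Prop := forall n, (n <= k)%N -> g n = 0.
(* s^(-k) g tends to infinity (negative valuation) *)
Definition laurent_large (k : nat) (g : fps) : Prop := exists2 n, (n < k)%N & g n != 0.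

(* Main.v *)
From HB Require Import structures.
Require Import Defs.
From mathcomp Require Import all_boot all_order all_algebra algC.
From mathcomp Require Import boolp.
From mathcomp Require Import ring zify.
Import Order.TTheory GRing.Theory Num.Theory.
Local Open Scope ring_scope.
Set Implicit Arguments. Unset Strict Implicit. Unset Printing Implicit Defensive.

Definition F := fps.
HB.instance Definition _ := Choice.copy F (nat -> algC).

Definition fopp (f : F) : F := fun n => - f n.

Lemma fps_addA : associative (fps_add : F -> F -> F).
Proof. by move=> f g k; apply: funext => n; rewrite /fps_add addrA. Qed.
Lemma fps_addC : commutative (fps_add : F -> F -> F).
Proof. by move=> f g; apply: funext => n; rewrite /fps_add addrC. Qed.
Lemma fps_add0 : left_id (fps_zero : F) fps_add.
Proof. by move=> f; apply: funext => n; rewrite /fps_add /fps_zero add0r. Qed.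
Lemma fps_addN : left_inverse (fps_zero : F) fopp fps_add.
Proof. by move=> f; apply: funext => n; rewrite /fps_add /fps_zero /fopp addNr. Qed.

HB.instance Definition _ := GRing.isZmodule.Build F fps_addA fps_addC fps_add0 fps_addN.

Definition T (n : nat) (f : F) : {poly algC} := \poly_(i < n.+1) f i.

Lemma coefT n f i : (T n f)`_i = if (i <= n)%N then f i else 0.
Proof. by rewrite coef_poly. Qed.

Lemma coefM_eq (p p' q q' : {poly algC}) n :
  (forall i, (i <= n)%N -> p`_i = p'`_i) -> (forall i, (i <= n)%N -> q`_i = q'`_i) ->
  (p * q)`_n = (p' * q')`_n.
Proof.
move=> Hp Hq; rewrite !coefM; apply: eq_bigr => [[i /= Hi]] _.
by rewrite Hp // Hq // leq_subr.
Qed.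

Lemma mulE (f g : F) n : fps_mul f g n = (T n f * T n g)`_n.
Proof.
rewrite coefM; apply: eq_bigr => [[i /= Hi]] _.
by rewrite !coefT -ltnS Hi leq_subr.
Qed.

Lemma T_mul (f g : F) n i : (i <= n)%N -> (T n (fps_mul f g))`_i = (T n f * T n g)`_i.
Proof.
move=> Hi; rewrite coefT Hi mulE; apply: coefM_eq => j Hj; rewrite !coefT Hj;
  by rewrite (leq_trans Hj Hi).
Qed.

Lemma fps_mulA : associative (fps_mul : F -> F -> F).
Proof.
move=> f g k; apply: funext => n.
rewrite mulE [RHS]mulE.
rewrite (@coefM_eq _ (T n f) _ (T n g * T n k) n); last 2 first.
- by [].
- by move=> i Hi; rewrite T_mul.
rewrite [RHS](@coefM_eq _ (T n f * T n g) _ (T n k) n); last 2 first.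
- by move=> i Hi; rewrite T_mul.
- by [].
by rewrite mulrA.
Qed.

Lemma fps_mulC : commutative (fps_mul : F -> F -> F).
Proof. by move=> f g; apply: funext => n; rewrite !mulE mulrC. Qed.

Lemma fps_mul1 : left_id (fps_Xn 0 : F) fps_mul.
Proof.
move=> f; apply: funext => n; rewrite mulE (@coefM_eq _ 1 _ (T n f) n).
- by rewrite mul1r coefT leqnn.
- by move=> i Hi; rewrite coefT Hi coefC /fps_Xn; case: (i == 0%N).
- by [].
Qed.

Lemma fps_mulDl : left_distributive (fps_mul : F -> F -> F) fps_add.
Proof.
move=> f g k; apply: funext => n; rewrite /fps_add !mulE.
rewrite (@coefM_eq _ (T n f + T n g) _ (T n k) n).
- by rewrite mulrDl coefD.
- by move=> i Hi; rewrite coefD !coefT Hi.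
- by [].
Qed.

Lemma fps_one_neq0 : (fps_Xn 0 : F) != fps_zero.
Proof.
apply/eqP => H; have := congr1 (fun f => f 0%N) H; rewrite /fps_Xn /fps_zero /=.
by move/eqP; rewrite oner_eq0.
Qed.

HB.instance Definition _ := GRing.Zmodule_isComNzRing.Build F
  fps_mulA fps_mulC fps_mul1 fps_mulDl fps_one_neq0.

Lemma test (a b : F) : (a + b) * (a - b) = a * a - b * b.
Proof. ring. Qed.

Lemma addE (f g : F) n : (f + g) n = f n + g n. Proof. by []. Qed.
Lemma oppE (f : F) n : (- f) n = - f n. Proof. by []. Qed.
Lemma subE (f g : F) n : (f - g) n = f n - g n. Proof. by []. Qed.
Lemma zeroE n : (0 : F) n = 0. Proof. by []. Qed.
Lemma oneE n : (1 : F) n = (n == 0%N)%:R. Proof. by []. Qed.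
Lemma mulE' (f g : F) n : (f * g) n = \sum_(i < n.+1) f i * g (n - i)%N.
Proof. by []. Qed.
Lemma sumE I (r : seq I) (P : pred I) (G : I -> F) n :
  (\sum_(i <- r | P i) G i) n = \sum_(i <- r | P i) G i n.
Proof. by apply: (big_morph (fun f : F => f n)). Qed.
Lemma fmulnE (f : F) k n : (f *+ k) n = f n *+ k.
Proof. by elim: k => [|k IH]; rewrite ?mulr0n // !mulrS addE IH. Qed.

Lemma fps_powE (f : F) m : fps_pow f m = f ^+ m.
Proof. by elim: m => [|m IH] //=; rewrite exprS -IH. Qed.
Lemma fps_sumE (s : seq F) : fps_sum s = \sum_(x <- s) x.
Proof. by elim: s => [|x s IH]; rewrite ?big_nil ?big_cons //= -IH. Qed.

Lemma feq (f g : F) : (forall n, f n = g n) -> f = g.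
Proof. by move=> H; apply: funext. Qed.

Definition fC (c : algC) : F := fun n => c * (n == 0%N)%:R.
Lemma fCM c (f : F) n : (fC c * f) n = c * f n.
Proof.
rewrite mulE' big_ord_recl /= big1 ?addr0 /fC ?subn0 ?mulr1 //.
by move=> i _; rewrite /bump /= mulr0 mul0r.
Qed.
Lemma fC_morph : monoid_morphism fC.
Proof.
split; first by apply: feq => n; rewrite /fC mul1r.
by move=> a b; apply: feq => n; rewrite fCM /fC mulrA.
Qed.
Lemma fC_add : zmod_morphism fC.
Proof. by move=> a b; apply: feq => n; rewrite /fC subE mulrBl. Qed.
HB.instance Definition _ := GRing.isZmodMorphism.Build algC F fC fC_add.
HB.instance Definition _ := GRing.isMonoidMorphism.Build algC F fC fC_morph.

Lemma fCE c n : fC c n = if n == 0%N then c else 0.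
Proof. by rewrite /fC; case: (n == 0%N); rewrite ?mulr1 ?mulr0. Qed.

Definition X : F := fps_Xn 1.

Lemma TXn k n i : (i <= n)%N -> (T n (fps_Xn k))`_i = ('X^k : {poly algC})`_i.
Proof. by move=> Hi; rewrite coefT Hi coefXn. Qed.

Lemma fps_XnM k (f : F) n : ((fps_Xn k : F) * f) n = if (n < k)%N then 0 else f (n - k)%N.
Proof.
rewrite /GRing.mul /= mulE (@coefM_eq _ 'X^k _ (T n f) n).
- by rewrite coefXnM coefT leq_subr.
- by move=> i Hi; rewrite TXn.
- by [].
Qed.

Lemma XnE k : (fps_Xn k : F) = X ^+ k.
Proof.
elim: k => [|k IH]; first by apply: feq => n; rewrite expr0.
rewrite exprS -IH; apply: feq => n.
rewrite fps_XnM /fps_Xn; case: n => [|n]; first by [].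
by rewrite ltnS ltn0 subn1 succnK eqSS.
Qed.

Lemma XnM k (f : F) n : (X ^+ k * f) n = if (n < k)%N then 0 else f (n - k)%N.
Proof. by rewrite -XnE fps_XnM. Qed.

Lemma XnM_add k (f : F) n : (X ^+ k * f) (n + k)%N = f n.
Proof. by rewrite XnM ltnNge leq_addl /= addnK. Qed.

Lemma XnK k (f g : F) : X ^+ k * f = X ^+ k * g -> f = g.
Proof. by move=> H; apply: feq => n; rewrite -(XnM_add k f) -(XnM_add k g) H. Qed.

Definition vanish (f : F) r := forall n, (n < r)%N -> f n = 0.

Lemma vanishW (f : F) r s : (s <= r)%N -> vanish f r -> vanish f s.
Proof. by move=> Hs H n Hn; apply: H; apply: leq_trans Hs. Qed.

Lemma mul_vanish (f g : F) a b : vanish f a -> vanish g b ->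
  vanish (f * g) (a + b) /\ (f * g) (a + b)%N = f a * g b.
Proof.
move=> Hf Hg; split.
  move=> n Hn; rewrite mulE' big1 // => [[i /= Hi]] _.
  case: (ltnP i a) => Ha; first by rewrite Hf // mul0r.
  rewrite Hg ?mulr0 //; rewrite ltn_subLR; last by rewrite -ltnS.
  by apply: leq_trans Hn _; rewrite leq_add2r.
rewrite mulE' (bigD1 (@Ordinal (a + b).+1 a (leq_addr b a))) //= addKn big1 ?addr0 //.
move=> [i /= Hi] /eqP Hne.
have Hne' : i != a by apply/eqP => E; apply: Hne; apply: val_inj.
case: (ltnP i a) => Ha; first by rewrite Hf // mul0r.
rewrite Hg ?mulr0 //; have Ha' : (a < i)%N by rewrite ltn_neqAle eq_sym Hne' Ha.
by rewrite ltn_subLR; rewrite ?ltn_add2r // -ltnS.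
Qed.

Lemma exp_vanish (f : F) a m : vanish f a ->
  vanish (f ^+ m) (m * a) /\ (f ^+ m) (m * a)%N = f a ^+ m.
Proof.
move=> Hf; elim: m => [|m [IH1 IH2]].
  by split=> //; rewrite mul0n expr0.
have [H1 H2] := mul_vanish Hf IH1.
by rewrite exprS mulSn; split => //; rewrite H2 IH2 exprS.
Qed.

Lemma nonzero_val (f : F) : f != 0 -> exists r, vanish f r /\ f r != 0.
Proof.
move=> Hf.
have Hex : exists n, f n != 0.
  apply/not_existsP => H; move/eqP: Hf; apply; apply: feq => n.
  by move: (H n) => /negP; rewrite negbK => /eqP.
have := ex_minnP Hex; case=> r Hr Hmin; exists r; split => //.
move=> n Hn; apply/eqP; apply/negPn/negP => Hn'.
by have := Hmin n Hn'; rewrite leqNgt Hn.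
Qed.

Lemma fmul_eq0 (f g : F) : f * g = 0 -> f = 0 \/ g = 0.
Proof.
move=> H; case: (pselect (f = 0)) => Hf; first by left.
case: (pselect (g = 0)) => Hg; first by right.
have [a [Ha1 Ha2]] := nonzero_val (introN eqP Hf).
have [b [Hb1 Hb2]] := nonzero_val (introN eqP Hg).
have [_ H2] := mul_vanish Ha1 Hb1.
by move: H2; rewrite H zeroE => /esym /eqP; rewrite mulf_eq0 (negbTE Ha2) (negbTE Hb2).
Qed.

Lemma fmulK (f g k : F) : k != 0 -> f * k = g * k -> f = g.
Proof.
move=> Hk H; have : (f - g) * k = 0 by rewrite mulrBl H subrr.
case/fmul_eq0 => [/eqP|/eqP]; last by rewrite (negbTE Hk).
by rewrite subr_eq0 => /eqP.
Qed.

Lemma fexp_neq0 (f : F) m : f != 0 -> f ^+ m != 0.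
Proof.
move=> Hf; elim: m => [|m IH]; first by rewrite expr0 oner_neq0.
rewrite exprS; apply/eqP => /fmul_eq0 [] /eqP; by [rewrite (negbTE Hf) | rewrite (negbTE IH)].
Qed.

Definition shift (f : F) r : F := fun n => f (n + r)%N.
Lemma shiftE (f : F) r : vanish f r -> f = X ^+ r * shift f r.
Proof.
move=> Hf; apply: feq => n; rewrite XnM; case: ltnP => Hn; first by rewrite Hf.
by rewrite /shift subnK.
Qed.

Lemma mul_eq_upto (f f' g g' : F) n :
  (forall i, (i <= n)%N -> f i = f' i) -> (forall i, (i <= n)%N -> g i = g' i) ->
  (f * g) n = (f' * g') n.
Proof.
move=> Hf Hg; rewrite !mulE'; apply: eq_bigr => [[i /= Hi]] _.
by rewrite Hf // Hg // leq_subr.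
Qed.

Definition PE (p : {poly algC}) (q : F) : F := (map_poly fC p).[q].

Lemma PE_coef (p : {poly algC}) (q : F) n : q 0%N = 0 ->
  PE p q n = \sum_(i < n.+1) p`_i * (q ^+ i) n.
Proof.
move=> q0; rewrite /PE (@horner_coef_wide _ (n.+1 + size p)); last first.
  by rewrite /map_poly (leq_trans (size_poly _ _)) // leq_addl.
rewrite sumE big_split_ord /= [X in _ + X]big1 ?addr0.
  by apply: eq_bigr => i _; rewrite coef_map fCM.
move=> [i /= Hi] _; rewrite coef_map fCM.
have Hq : vanish q 1 by case.
have [H _] := exp_vanish (n.+1 + i) Hq.
by rewrite H ?mulr0 // muln1 ltnS leq_addr.
Qed.

Lemma PE_mul p1 p2 q : PE (p1 * p2) q = PE p1 q * PE p2 q.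
Proof. by rewrite /PE rmorphM hornerM. Qed.
Lemma PE_add p1 p2 q : PE (p1 + p2) q = PE p1 q + PE p2 q.
Proof. by rewrite /PE rmorphD hornerD. Qed.

Definition fcomp (b q : F) : F := fun n => PE (T n b) q n.

Lemma compE (b q : F) n : q 0%N = 0 -> fcomp b q n = \sum_(i < n.+1) b i * (q ^+ i) n.
Proof.
move=> q0; rewrite /fcomp PE_coef //; apply: eq_bigr => [[i /= Hi]] _.
by rewrite coefT -ltnS Hi.
Qed.

Lemma PE_T (b q : F) N n : q 0%N = 0 -> (n <= N)%N -> PE (T N b) q n = fcomp b q n.
Proof.
move=> q0 HN; rewrite compE // PE_coef //; apply: eq_bigr => [[i /= Hi]] _.
by rewrite coefT (leq_trans _ HN) // -ltnS.
Qed.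

Lemma comp_mul (b1 b2 q : F) : q 0%N = 0 -> fcomp (b1 * b2) q = fcomp b1 q * fcomp b2 q.
Proof.
move=> q0; apply: feq => n.
have -> : fcomp (b1 * b2) q n = PE (T n b1 * T n b2) q n.
  rewrite /fcomp !PE_coef //; apply: eq_bigr => [[i /= Hi]] _.
  by rewrite T_mul // -ltnS.
rewrite PE_mul; apply: mul_eq_upto => i Hi; by rewrite PE_T.
Qed.

Lemma comp_add (b1 b2 q : F) : q 0%N = 0 -> fcomp (b1 + b2) q = fcomp b1 q + fcomp b2 q.
Proof.
move=> q0; apply: feq => n; rewrite addE !compE // -big_split; apply: eq_bigr => i _.
by rewrite addE mulrDl.
Qed.

Lemma comp_sub (b1 b2 q : F) : q 0%N = 0 -> fcomp (b1 - b2) q = fcomp b1 q - fcomp b2 q.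
Proof.
move=> q0; apply: feq => n; rewrite subE !compE // -sumrB; apply: eq_bigr => i _.
by rewrite subE mulrBl.
Qed.

Lemma comp_C c (q : F) : q 0%N = 0 -> fcomp (fC c) q = fC c.
Proof.
move=> q0; apply: feq => n; rewrite compE // big_ord_recl big1 ?addr0.
  by rewrite fCE /= expr0 oneE /fC.
by move=> i _; rewrite fCE /= mul0r.
Qed.

Lemma comp_1 (q : F) : q 0%N = 0 -> fcomp 1 q = 1.
Proof. by move=> q0; rewrite -(rmorph1 fC) comp_C. Qed.

Lemma comp_X (q : F) : q 0%N = 0 -> fcomp X q = q.
Proof.
move=> q0; apply: feq => n; rewrite compE //.
case: n => [|n]; first by rewrite big_ord1 /X /fps_Xn /= mul0r q0.
rewrite big_ord_recl big_ord_recl big1 /X /fps_Xn /= ?mul0r ?add0r ?addr0 ?mul1r ?expr1 //.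
by move=> i _; rewrite mul0r.
Qed.

Lemma comp_exp (b q : F) m : q 0%N = 0 -> fcomp (b ^+ m) q = fcomp b q ^+ m.
Proof.
move=> q0; elim: m => [|m IH]; first by rewrite !expr0 comp_1.
by rewrite !exprS comp_mul // IH.
Qed.

Lemma comp_vanish (b q : F) r : q 0%N = 0 -> vanish b r ->
  vanish (fcomp b q) r /\ fcomp b q r = b r * q 1%N ^+ r.
Proof.
move=> q0 Hb.
have Hq : vanish q 1 by case.
split.
  move=> n Hn; rewrite compE // big1 // => [[i /= Hi]] _.
  by rewrite Hb ?mul0r // (leq_trans Hi).
rewrite compE // big_ord_recr /= big1 ?add0r.
  by have [_] := exp_vanish r Hq; rewrite muln1 => ->.
move=> [i /= Hi] _; by rewrite Hb ?mul0r.
Qed.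

Lemma comp_inj (b1 b2 q : F) : q 0%N = 0 -> q 1%N != 0 -> fcomp b1 q = fcomp b2 q -> b1 = b2.
Proof.
move=> q0 q1 H; apply/eqP; rewrite -subr_eq0; apply/negPn/negP => Hne.
have [r [Hr1 Hr2]] := nonzero_val Hne.
have [_ ] := comp_vanish q0 Hr1; rewrite comp_sub // H subrr zeroE => /esym/eqP.
by rewrite mulf_eq0 (negbTE Hr2) expf_eq0 (negbTE q1) andbF.
Qed.

Definition geom : F := fun _ => 1.
Lemma geomE : geom * (1 - X) = 1.
Proof.
apply: feq => n; rewrite mulrBr mulr1 subE mulrC -(expr1 X) XnM.
by case: n => [|n]; rewrite oneE /geom ?subr0 // ltnS ltn0 subrr.
Qed.

Definition sinv (f : F) : F :=
  fC (f 0%N)^-1 * fcomp geom (1 - fC (f 0%N)^-1 * f).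

Lemma sinvE (f : F) : f 0%N != 0 -> f * sinv f = 1.
Proof.
move=> f0; set r := (f 0%N)^-1; set q := 1 - fC r * f.
have q0 : q 0%N = 0 by rewrite /q subE fCM oneE mulVf // subrr.
have : fcomp (geom * (1 - X)) q = 1 by rewrite geomE comp_1.
rewrite comp_mul // comp_sub // comp_1 // comp_X // /q.
rewrite /sinv -/r -/q => H; rewrite -{}H /q; ring.
Qed.

Definition D (f : F) : F := fun n => f n.+1 *+ n.+1.

Lemma D_add (f g : F) : D (f + g) = D f + D g.
Proof. by apply: feq => n; rewrite /D !addE mulrnDl. Qed.
Lemma D_sub (f g : F) : D (f - g) = D f - D g.
Proof. by apply: feq => n; rewrite /D !subE mulrnBl. Qed.
Lemma D_C c : D (fC c) = 0.
Proof. by apply: feq => n; rewrite /D fCE /= mul0rn. Qed.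
Lemma D_1 : D 1 = 0.
Proof. by rewrite -(rmorph1 fC) D_C. Qed.
Lemma D_X : D X = 1.
Proof. by apply: feq => n; rewrite /D /X /fps_Xn oneE eqSS; case: n => [|n] //; rewrite mul0rn. Qed.

Lemma mulT (f g : F) n : (f * g) n = (T n f * T n g)`_n.
Proof. exact: mulE. Qed.

Lemma D_mul (f g : F) : D (f * g) = D f * g + f * D g.
Proof.
apply: feq => n; rewrite addE /D mulT -coef_deriv derivM coefD.
congr (_ + _); rewrite mulT; apply: coefM_eq => i Hi.
- by rewrite coef_deriv !coefT Hi ltnS Hi.
- by rewrite !coefT Hi (leq_trans Hi).
- by rewrite !coefT Hi (leq_trans Hi).
- by rewrite coef_deriv !coefT Hi ltnS Hi.
Qed.

Lemma D_exp (f : F) m : D (f ^+ m.+1) = f ^+ m * D f *+ m.+1.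
Proof.
elim: m => [|m IH]; first by rewrite expr1 expr0 mul1r.
rewrite exprS D_mul IH exprS [in RHS]mulrSr; ring.
Qed.

Lemma XD (f : F) n : (X * D f) n = f n *+ n.
Proof.
rewrite -(expr1 X) XnM; case: n => [|n]; first by rewrite mulr0n.
by rewrite ltnS ltn0 subn1 /D.
Qed.

Definition Bs (a : algC) : F := fun j => gbinom a j.

Lemma gbinom0 a : gbinom a 0 = 1.
Proof. by rewrite /gbinom big_ord0 fact0 divr1. Qed.

Lemma gbinomS a j : gbinom a j.+1 *+ j.+1 = (a - j%:R) * gbinom a j.
Proof.
rewrite /gbinom big_ord_recr /= factS natrM -mulr_natr.
have Hj : (j.+1%:R : algC) != 0 by rewrite pnatr_eq0.
have Hf : ((j`!)%:R : algC) != 0 by rewrite pnatr_eq0 -lt0n fact_gt0.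
field; by rewrite Hf addrC natr1 Hj.
Qed.

Definition ode (f : F) (a : algC) := (1 + X) * D f = fC a * f.

Lemma ode_coef (f : F) n : ((1 + X) * D f) n = f n.+1 *+ n.+1 + f n *+ n.
Proof. by rewrite mulrDl mul1r addE XD. Qed.

Lemma B_ode a : ode (Bs a) a.
Proof.
apply: feq => n; rewrite ode_coef fCM /Bs gbinomS -mulr_natr; ring.
Qed.

Lemma ode_mul (f g : F) a b : ode f a -> ode g b -> ode (f * g) (a + b).
Proof.
rewrite /ode => Hf Hg; rewrite D_mul.
have -> : (1 + X) * (D f * g + f * D g) = ((1 + X) * D f) * g + f * ((1 + X) * D g).
  by ring.
by rewrite Hf Hg rmorphD; ring.
Qed.

Lemma ode_uniq (f g : F) a : ode f a -> ode g a -> f 0%N = g 0%N -> f = g.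
Proof.
move=> Hf Hg H0; apply: feq; elim => [//|n IH].
have Ef := congr1 (fun k : F => k n) Hf; have Eg := congr1 (fun k : F => k n) Hg.
move: Ef Eg; rewrite /= !ode_coef !fCM IH => Ef Eg.
have : f n.+1 *+ n.+1 = g n.+1 *+ n.+1.
  by apply: (addIr (g n *+ n)); rewrite Ef Eg.
rewrite -[LHS]mulr_natr -[RHS]mulr_natr => /mulIf; apply; by rewrite pnatr_eq0.
Qed.

Lemma Bs0E a : Bs a 0%N = 1.
Proof. by rewrite /Bs gbinom0. Qed.

Lemma Bs_add a b : Bs a * Bs b = Bs (a + b).
Proof.
apply: ode_uniq; [apply: ode_mul; apply: B_ode| apply: B_ode|].
by rewrite mulE' big_ord1 !Bs0E mulr1.
Qed.

Lemma Bs_zero : Bs 0 = 1.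
Proof.
apply: ode_uniq; [apply: B_ode| |by rewrite Bs0E].
by rewrite /ode D_1 mulr0 rmorph0 mul0r.
Qed.

Lemma Bs_exp a m : Bs a ^+ m = Bs (m%:R * a).
Proof.
elim: m => [|m IH]; first by rewrite expr0 mul0r Bs_zero.
by rewrite exprS IH Bs_add mulrSr mulrDl mul1r addrC.
Qed.

Lemma Bs_one : Bs 1 = 1 + X.
Proof.
apply: ode_uniq; [apply: B_ode| |].
  by rewrite /ode D_add D_1 D_X add0r mulr1 rmorph1 mul1r.
by rewrite Bs0E addE oneE /X /fps_Xn addr0.
Qed.

Definition PhiF (h : nat) : F := Phi h.
Definition qq (h : nat) : F := PhiF h - 1.
Definition phi (h : nat) : F := fcomp (Bs (h%:R^-1)) (qq h).
Definition psi (h : nat) : F := sinv (phi h).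
Definition gg (h : nat) : F := X * psi h.
Definition K (h n : nat) : F := phi h ^+ n.+1 * D (gg h).
Definition L (h n : nat) (A : F) : algC := (A * K h n) n.

Lemma qq0 h : (0 < h)%N -> qq h 0%N = 0.
Proof.
move=> hp; rewrite /qq subE oneE /PhiF /Phi leq0n /=.
by rewrite eq_sym -lt0n hp subrr.
Qed.

Lemma phi0 h : (0 < h)%N -> phi h 0%N = 1.
Proof. by move=> hp; rewrite /phi compE ?qq0 // big_ord1 expr0 oneE mulr1 Bs0E. Qed.

Lemma phi_exp h n : (0 < h)%N -> phi h ^+ n = fcomp (Bs (n%:R / h%:R)) (qq h).
Proof. by move=> hp; rewrite /phi -comp_exp ?qq0 // Bs_exp. Qed.

Lemma phi_h h : (0 < h)%N -> phi h ^+ h = PhiF h.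
Proof.
move=> hp; rewrite phi_exp // divff ?pnatr_eq0 -?lt0n // Bs_one.
rewrite comp_add ?qq0 // comp_1 ?qq0 // comp_X ?qq0 // /qq; ring.
Qed.

Lemma phi_psi h : (0 < h)%N -> phi h * psi h = 1.
Proof. by move=> hp; apply: sinvE; rewrite phi0 // oner_eq0. Qed.

Lemma psi0 h : (0 < h)%N -> psi h 0%N = 1.
Proof.
move=> hp; have := congr1 (fun f : F => f 0%N) (phi_psi hp).
by rewrite /= mulE' big_ord1 phi0 // mul1r oneE.
Qed.

Lemma gg0 h : gg h 0%N = 0.
Proof. by rewrite /gg -(expr1 X) XnM. Qed.

Lemma gg1 h : (0 < h)%N -> gg h 1%N = 1.
Proof. by move=> hp; rewrite /gg -(expr1 X) XnM /= psi0. Qed.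

Lemma Dgg h : D (gg h) = psi h + X * D (psi h).
Proof. by rewrite /gg D_mul D_X mul1r. Qed.

Lemma phi_Dpsi h : (0 < h)%N -> phi h * D (psi h) = - (D (phi h) * psi h).
Proof.
move=> hp; have := congr1 D (phi_psi hp); rewrite D_mul D_1 => /eqP.
by rewrite addr_eq0 => /eqP ->; rewrite opprK.
Qed.

Lemma K_eq h a : (0 < h)%N ->
  K h a = phi h ^+ a - X * (phi h ^+ a * psi h * D (phi h)).
Proof.
move=> hp; rewrite /K Dgg exprSr.
have E1 := phi_psi hp; have E2 := phi_Dpsi hp.
have -> : phi h ^+ a * phi h * (psi h + X * D (psi h)) =
   phi h ^+ a * (phi h * psi h) + X * phi h ^+ a * (phi h * D (psi h)) by ring.
rewrite E1 E2; ring.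
Qed.

Lemma Kcoef h a p : (0 < h)%N -> (0 < a)%N ->
  K h a p = (phi h ^+ a) p * ((a%:R - p%:R) / a%:R).
Proof.
move=> hp; case: a => [//|b] _; rewrite K_eq // subE.
have Ha : (b.+1%:R : algC) != 0 by rewrite pnatr_eq0.
have E : phi h ^+ b.+1 * psi h * D (phi h) = phi h ^+ b * D (phi h).
  rewrite exprS.
  have -> : phi h * phi h ^+ b * psi h * D (phi h) =
     phi h ^+ b * (phi h * psi h) * D (phi h) by ring.
  by rewrite phi_psi // mulr1.
rewrite E.
have E2 : (X * (phi h ^+ b * D (phi h))) p * b.+1%:R = (phi h ^+ b.+1) p * p%:R.
  by rewrite mulr_natr -fmulnE -mulrnAr -D_exp XD mulr_natr.
have E3 : (X * (phi h ^+ b * D (phi h))) p = (phi h ^+ b.+1) p * p%:R / b.+1%:R.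
  by rewrite -E2 mulfK.
rewrite E3; field; by rewrite addrC natr1.
Qed.

Lemma gg_vanish h : vanish (gg h) 1.
Proof. by case=> // _; rewrite gg0. Qed.

Lemma K_shift h p j : (0 < h)%N -> psi h ^+ j * K h (p + j) = K h p.
Proof.
move=> hp; rewrite /K -addSn exprD.
have E : (phi h * psi h) ^+ j = 1 by rewrite phi_psi // expr1n.
rewrite exprMn in E.
transitivity ((phi h ^+ j * psi h ^+ j) * (phi h ^+ p.+1 * D (gg h))); last by rewrite E mul1r.
move: (phi h ^+ j) (psi h ^+ j) (phi h ^+ p.+1) (D (gg h)) => a b c d; ring.
Qed.

Lemma L_gexp h n j : (0 < h)%N -> L h n (gg h ^+ j) = (j == n)%:R.
Proof.
move=> hp; case: (leqP j n) => Hjn.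
  rewrite /L -(subnK Hjn) /gg exprMn -mulrA K_shift // XnM_add.
  case E: (n - j)%N => [|p].
    by rewrite add0n eqxx K_eq // subE expr0 oneE -(expr1 X) XnM /= subr0.
  by rewrite Kcoef // subrr mul0r mulr0 -{1}(add0n j) eqn_add2r.
have Hv0 : vanish (K h n) 0 by move=> k.
have [H _] := mul_vanish (exp_vanish j (gg_vanish h)).1 Hv0.
rewrite /L H; last by rewrite muln1 addn0.
by rewrite gtn_eqF.
Qed.

Lemma L_sub h n (A B : F) : L h n (A - B) = L h n A - L h n B.
Proof. by rewrite /L mulrBl subE. Qed.

Lemma L_C h n c (A : F) : L h n (fC c * A) = c * L h n A.
Proof. by rewrite /L -mulrA fCM. Qed.

Lemma L_upto h n (A B : F) : (forall i, (i <= n)%N -> A i = B i) -> L h n A = L h n B.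
Proof. by move=> H; rewrite /L; apply: mul_eq_upto. Qed.

Lemma L_PE h r (p : {poly algC}) : (0 < h)%N -> L h r (PE p (gg h)) = p`_r.
Proof.
move=> hp; rewrite /PE (@horner_coef_wide _ (r.+1 + size p)); last first.
  by rewrite /map_poly (leq_trans (size_poly _ _)) // leq_addl.
rewrite /L mulr_suml sumE.
rewrite (bigD1 (@Ordinal (r.+1 + size p) r (leq_trans (ltnSn r) (leq_addr _ _)))) //=.
rewrite big1 ?addr0.
  by rewrite coef_map -mulrA fCM -/(L h r _) L_gexp // eqxx mulr1.
move=> [i /= Hi] /eqP Hne; rewrite coef_map -mulrA fCM -/(L h r _) L_gexp //.
have -> : (i == r) = false by apply/eqP => E; apply: Hne; apply: val_inj.
by rewrite mulr0.
Qed.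

Lemma expand h (A : F) : (0 < h)%N -> A = fcomp (fun n => L h n A) (gg h).
Proof.
move=> hp; apply/eqP; rewrite -subr_eq0; apply/negPn/negP => Hne.
have [r [Hr1 Hr2]] := nonzero_val Hne.
set E := A - _ in Hr1 Hr2 Hne.
have H1 : L h r E = E r.
  have V0 : forall f : F, vanish f 0 by move=> f k.
  have [_ H] := mul_vanish Hr1 (V0 (K h r)).
  rewrite /L -{2}(addn0 r) H.
  have [_ H'] := mul_vanish (exp_vanish r.+1 (V0 (phi h))).1 (V0 (D (gg h))).
  rewrite /K; move: H'; rewrite !muln0 addn0 => ->.
  have [_] := exp_vanish r.+1 (V0 (phi h)); rewrite muln0 => ->.
  by rewrite phi0 // expr1n mul1r /D gg1 // mulr1.
have H2 : L h r E = 0.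
  rewrite /E L_sub (@L_upto h r (fcomp _ _) (PE (T r (fun n => L h n A)) (gg h))).
    by rewrite L_PE // coefT leqnn subrr.
  by move=> i Hi; rewrite PE_T ?gg0.
by move: Hr2; rewrite -H1 H2 eqxx.
Qed.

Definition U (h : nat) : F := fun n => L h n X.

Lemma U_pow h m : (0 < h)%N -> U h ^+ m = (fun n => L h n (X ^+ m)).
Proof.
move=> hp; apply: (@comp_inj _ _ (gg h)); rewrite ?gg0 ?gg1 ?oner_eq0 //.
rewrite comp_exp ?gg0 // -/(U h) -expand // -expand //.
Qed.

Lemma Lag h n m : (0 < h)%N -> (0 < m)%N ->
  L h n (X ^+ m) = if (n < m)%N then 0 else (phi h ^+ n) (n - m)%N * (m%:R / n%:R).
Proof.
move=> hp mp; rewrite /L XnM; case: ltnP => // Hmn.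
have np : (0 < n)%N by apply: leq_trans Hmn.
rewrite Kcoef // natrB //; congr (_ * _); congr (_ / _); ring.
Qed.

Lemma sum_eqn (s : seq nat) n : uniq s -> \sum_(j <- s) ((n == j)%:R : algC) = (n \in s)%:R.
Proof.
elim: s => [|x s IH] /=; first by rewrite big_nil.
move=> /andP [Hx Hs]; rewrite big_cons IH // in_cons.
case: (eqVneq n x) => [->|Hne]; first by rewrite (negbTE Hx) /= mulr0n addr0.
by rewrite /= add0r.
Qed.

Lemma Phi_idx_uniq h : uniq (Phi_idx h).
Proof. by rewrite /Phi_idx filter_uniq // iota_uniq. Qed.

Lemma mem_Phi_idx h n : (n \in Phi_idx h) = (n <= 2 * h)%N && (n != h).
Proof. by rewrite /Phi_idx mem_filter mem_iota add0n ltnS andbC. Qed.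

Lemma Phi_coef h n : PhiF h n = \sum_(j <- Phi_idx h) (n == j)%:R.
Proof. by rewrite sum_eqn ?Phi_idx_uniq // mem_Phi_idx. Qed.

Lemma Xn_coef k n : (X ^+ k) n = (n == k)%:R.
Proof. by rewrite -XnE. Qed.

Lemma PhiF_sum h : PhiF h = \sum_(j <- Phi_idx h) X ^+ j.
Proof. by apply: feq => n; rewrite Phi_coef sumE; apply: eq_bigr => j _; rewrite Xn_coef. Qed.

Definition Sm (h : nat) (y : F) : F := \sum_(j <- Phi_idx h) y ^+ j.

Lemma Sm0 h (y : F) : (0 < h)%N -> y 0%N = 0 -> Sm h y 0%N = 1.
Proof.
move=> hp y0; rewrite /Sm sumE.
have V0 : vanish y 0 by move=> k.
rewrite (eq_bigr (fun j => ((0%N == j)%:R : algC))).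
  by rewrite -Phi_coef /PhiF /Phi leq0n eq_sym -lt0n hp.
move=> j _; have [_] := exp_vanish j V0; rewrite muln0 => ->; rewrite y0 expr0n.
by rewrite eq_sym.
Qed.

Lemma comp_sum (s : seq nat) (G : nat -> F) (q : F) : q 0%N = 0 ->
  fcomp (\sum_(j <- s) G j) q = \sum_(j <- s) fcomp (G j) q.
Proof.
move=> q0; elim: s => [|x s IH]; first by rewrite !big_nil -(rmorph0 fC) comp_C.
by rewrite !big_cons comp_add // IH.
Qed.

Lemma comp_Sm h (y q : F) : q 0%N = 0 -> fcomp (Sm h y) q = Sm h (fcomp y q).
Proof.
by move=> q0; rewrite /Sm comp_sum //; apply: eq_bigr => j _; rewrite comp_exp.
Qed.

Definition Eqn (h d : nat) (y : F) := y ^+ h = X ^+ (h * d) * Sm h y.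

Lemma U0 h : (0 < h)%N -> U h 0%N = 0.
Proof. by move=> hp; have := congr1 (fun f : F => f 0%N) (U_pow 1 hp); rewrite expr1 /= Lag. Qed.

Lemma U1 h : (0 < h)%N -> U h 1%N = 1.
Proof.
move=> hp; have := congr1 (fun f : F => f 1%N) (U_pow 1 hp); rewrite expr1 /= Lag //=.
by rewrite expr1 subnn phi0 // divr1 mulr1.
Qed.

Lemma U_eqn h : (0 < h)%N -> Eqn h 1 (U h).
Proof.
move=> hp; apply: (@comp_inj _ _ (gg h)); rewrite ?gg0 ?gg1 ?oner_eq0 //.
rewrite comp_exp ?gg0 // comp_mul ?gg0 // comp_exp ?gg0 // comp_X ?gg0 //.
rewrite comp_Sm ?gg0 //.
have E : fcomp (U h) (gg h) = X by rewrite [RHS](expand X hp).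
rewrite E /Sm -PhiF_sum -phi_h // /gg muln1 -exprMn.
by rewrite -mulrA [psi h * _]mulrC phi_psi // mulr1.
Qed.

Lemma qX0 c d : (0 < d)%N -> (fC c * X ^+ d) 0%N = 0.
Proof. by move=> dp; rewrite fCM Xn_coef eq_sym (gtn_eqF dp) mulr0. Qed.

Lemma qX_exp c d i n : ((fC c * X ^+ d) ^+ i) n = c ^+ i * (n == d * i)%N%:R.
Proof. by rewrite exprMn -rmorphXn fCM -exprM Xn_coef. Qed.

Lemma subst_comp c d (f : F) : (0 < d)%N -> fps_subst c d f = fcomp f (fC c * X ^+ d).
Proof.
move=> dp; apply: feq => n; rewrite compE ?qX0 // /fps_subst.
under eq_bigr do rewrite qX_exp.
case: (boolP (d %| n)%N) => Hdn.
  have Hm : (n %/ d < n.+1)%N by rewrite ltnS leq_div.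
  rewrite (bigD1 (Ordinal Hm)) //= big1 ?addr0.
    by rewrite mulnC divnK // eqxx mulr1n mulr1 mulrC.
  move=> [i /= Hi] /eqP Hne.
  case: (eqVneq n (d * i)%N) => E; last by rewrite mulr0n !mulr0.
  by exfalso; apply: Hne; apply: val_inj => /=; rewrite E mulKn.
rewrite big1 // => [[i /= Hi]] _.
case: (eqVneq n (d * i)%N) => E; last by rewrite mulr0n !mulr0.
by move: Hdn; rewrite E dvdn_mulr.
Qed.

Lemma subst_vanish c d (f : F) : (0 < d)%N -> f 0%N = 0 ->
  vanish (fps_subst c d f) d /\ fps_subst c d f d = c * f 1%N.
Proof.
move=> dp f0; split; last by rewrite /fps_subst dvdnn divnn dp expr1.
move=> n Hn; rewrite /fps_subst; case: ifP => // Hdn.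
case: n Hn Hdn => [|n] Hn Hdn; first by rewrite div0n f0 mulr0.
by move: (dvdn_leq (ltn0Sn n) Hdn); rewrite leqNgt Hn.
Qed.

Lemma subst_eqn h d c : (0 < h)%N -> (0 < d)%N -> c ^+ h = 1 ->
  Eqn h d (fps_subst c d (U h)).
Proof.
move=> hp dp ch; rewrite subst_comp // /Eqn -comp_exp ?qX0 //.
rewrite (U_eqn hp) muln1 comp_mul ?qX0 // comp_exp ?qX0 // comp_X ?qX0 //.
rewrite comp_Sm ?qX0 // exprMn -rmorphXn ch rmorph1 mul1r -exprM mulnC //.
Qed.

Lemma uniq_root h d c (y1 y2 : F) : (0 < h)%N -> (0 < d)%N -> c != 0 ->
  vanish y1 d -> vanish y2 d -> y1 d = c -> y2 d = c ->
  Eqn h d y1 -> Eqn h d y2 -> y1 = y2.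
Proof.
move=> hp dp c0 V1 V2 C1 C2 E1 E2.
set S1 := \sum_(i < h) y1 ^+ (h.-1 - i) * y2 ^+ i.
set S2 := \sum_(j <- Phi_idx h) \sum_(i < j) y1 ^+ (j.-1 - i) * y2 ^+ i.
have H1 : y1 ^+ h - y2 ^+ h = (y1 - y2) * S1 by rewrite subrXX.
have H2 : Sm h y1 - Sm h y2 = (y1 - y2) * S2.
  by rewrite /Sm -sumrB /S2 mulr_sumr; apply: eq_bigr => j _; rewrite subrXX.
have H3 : (y1 - y2) * (S1 - X ^+ (h * d) * S2) = 0.
  rewrite mulrBr -H1 E1 E2 -mulrBr H2.
  by rewrite mulrCA subrr.
case: (fmul_eq0 H3) => [/eqP|H4]; first by rewrite subr_eq0 => /eqP.
exfalso.
have HS1 : S1 (h.-1 * d)%N = c ^+ h.-1 *+ h.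
  rewrite /S1 sumE (eq_bigr (fun _ => c ^+ h.-1)); first by rewrite sumr_const card_ord.
  move=> [i /= Hi] _.
  have Hi' : (i <= h.-1)%N by rewrite -ltnS prednK.
  have -> : (h.-1 * d = (h.-1 - i) * d + i * d)%N by rewrite -mulnDl subnK.
  have [_ ->] := mul_vanish (exp_vanish (h.-1 - i) V1).1 (exp_vanish i V2).1.
  by rewrite (exp_vanish _ V1).2 (exp_vanish _ V2).2 C1 C2 -exprD subnK.
have HS2 : (X ^+ (h * d) * S2) (h.-1 * d)%N = 0.
  by rewrite XnM ifT // ltn_pmul2r // ltn_predL.
have := congr1 (fun f : F => f (h.-1 * d)%N) H4; rewrite /= subE HS1 HS2 subr0 zeroE.
move=> /eqP HH.
have : c ^+ h.-1 * h%:R != 0 by rewrite mulf_neq0 ?expf_neq0 // pnatr_eq0 -lt0n.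
by rewrite mulr_natr HH; move/eqP.
Qed.

Lemma prim_neq0 h (w : algC) : (0 < h)%N -> h.-primitive_root w -> w != 0.
Proof.
move=> hp pw; apply/eqP => W; have := prim_expr_order pw.
by rewrite W expr0n (gtn_eqF hp) => /eqP; rewrite eq_sym oner_eq0.
Qed.

Lemma small_root h d (w : algC) (y : F) : (0 < h)%N -> (0 < d)%N -> h.-primitive_root w ->
  y 0%N = 0 -> Eqn h d y -> exists2 i, (i < h)%N & y = fps_subst (w ^+ i) d (U h).
Proof.
move=> hp dp pw y0 E.
have C : (y ^+ h) (0 + h * d)%N = 1 by rewrite E XnM_add Sm0.
have Hy : y != 0.
  apply/eqP => Y; move: C; rewrite Y -(prednK hp) exprS mul0r zeroE => /eqP.
  by rewrite eq_sym oner_eq0.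
have [r [Vr Yr]] := nonzero_val Hy.
have [Vh Ch] := exp_vanish h Vr.
have rd : r = d.
  case: (ltngtP r d) => // H.
    exfalso; move: Ch; rewrite E XnM ifT ?ltn_pmul2l // => /esym/eqP.
    by rewrite expf_eq0 (negbTE Yr) andbF.
  by move: C; rewrite add0n Vh ?ltn_pmul2l // => /eqP; rewrite eq_sym oner_eq0.
subst r.
have Cd : (y d) ^+ h = 1 by rewrite -Ch; move: C; rewrite add0n.
have [[i Hi] /= Wi] := prim_rootP pw Cd.
exists i => //.
have [V2 C2] := subst_vanish (w ^+ i) dp (U0 hp).
apply: (@uniq_root h d (w ^+ i)) => //.
- by rewrite expf_eq0 (negbTE (prim_neq0 hp pw)) andbF.
- by rewrite C2 U1 // mulr1.
- by apply: subst_eqn => //; rewrite exprAC (prim_expr_order pw) expr1n.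
Qed.

Lemma root_iff h N k (g : F) : laurent_root h N k g <->
  X ^+ (h * k) * g ^+ h = X ^+ N * \sum_(j <- Phi_idx h) X ^+ ((2 * h - j) * k) * g ^+ j.
Proof.
have E1 : fps_mul (fps_Xn (h * k)) (fps_pow g h) = X ^+ (h * k) * g ^+ h.
  by rewrite fps_powE XnE.
have E2 : fps_mul (fps_Xn N) (fps_sum [seq fps_mul (fps_Xn ((2 * h - j) * k)) (fps_pow g j)
            | j <- Phi_idx h]) =
          X ^+ N * \sum_(j <- Phi_idx h) X ^+ ((2 * h - j) * k) * g ^+ j.
  have E3 : fps_sum [seq fps_mul (fps_Xn ((2 * h - j) * k)) (fps_pow g j) | j <- Phi_idx h]
     = \sum_(j <- Phi_idx h) X ^+ ((2 * h - j) * k) * g ^+ j.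
    by rewrite fps_sumE big_map; apply: eq_bigr => j _; rewrite fps_powE XnE.
  by rewrite E3 XnE.
by rewrite /laurent_root E1 E2.
Qed.

Lemma Xn_neq0 k : (X ^+ k : F) != 0.
Proof.
apply/eqP => H; have := congr1 (fun f : F => f k) H; rewrite /= Xn_coef eqxx zeroE.
by move/eqP; rewrite oner_eq0.
Qed.

Lemma shift_root h N k (y : F) : laurent_root h N k (X ^+ k * y) <-> y ^+ h = X ^+ N * Sm h y.
Proof.
rewrite root_iff.
have L : X ^+ (h * k) * (X ^+ k * y) ^+ h = X ^+ (2 * h * k) * y ^+ h.
  by rewrite exprMn mulrA -exprM -exprD; congr (X ^+ _ * _); lia.
have R : \sum_(j <- Phi_idx h) X ^+ ((2 * h - j) * k) * (X ^+ k * y) ^+ j =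
         X ^+ (2 * h * k) * Sm h y.
  rewrite /Sm mulr_sumr big_seq [RHS]big_seq; apply: eq_bigr => j.
  rewrite mem_Phi_idx => /andP [Hj _].
  by rewrite exprMn mulrA -exprM -exprD; congr (X ^+ _ * _); nia.
rewrite L R mulrCA; split; first by apply: XnK.
by move=> ->.
Qed.

Lemma palin h (G : nat -> F) :
  \sum_(j <- Phi_idx h) G (2 * h - j)%N = \sum_(j <- Phi_idx h) G j.
Proof.
rewrite /Phi_idx !big_filter.
have -> : iota 0 (2 * h).+1 = index_iota 0 (2 * h).+1 by rewrite /index_iota subn0.
rewrite [RHS]big_nat_rev big_nat_cond [RHS]big_nat_cond.
apply: eq_big => [i|i _]; last by rewrite add0n subSS.
rewrite add0n subSS; case: (leqP i (2 * h)) => Hi.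
  rewrite ltnS Hi /=; congr negb; apply/eqP/eqP => H; lia.
rewrite ltnS; have -> : (i <= 2 * h)%N = false by rewrite leqNgt Hi.
by rewrite !andbF.
Qed.

Lemma inv_root h N k (g y : F) : g * y = X ^+ k ->
  (laurent_root h N k g <-> y ^+ h = X ^+ N * Sm h y).
Proof.
move=> gy; rewrite root_iff.
have Hy : y != 0.
  by apply/eqP => Y; move: gy; rewrite Y mulr0 => /esym/eqP; rewrite (negbTE (Xn_neq0 k)).
have L : X ^+ (h * k) * g ^+ h * y ^+ (2 * h) = X ^+ (2 * h * k) * y ^+ h.
  have -> : (2 * h = h + h)%N by lia.
  rewrite exprD; transitivity (X ^+ (h * k) * (g * y) ^+ h * y ^+ h).
    by rewrite exprMn; move: (X ^+ (h * k)) (g ^+ h) (y ^+ h) => a b c; ring.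
  by rewrite gy -exprM -exprD; congr (X ^+ _ * _); lia.
have R : (\sum_(j <- Phi_idx h) X ^+ ((2 * h - j) * k) * g ^+ j) * y ^+ (2 * h) =
         X ^+ (2 * h * k) * Sm h y.
  rewrite mulr_suml /Sm -(palin h (fun j => y ^+ j)) mulr_sumr.
  rewrite big_seq [RHS]big_seq; apply: eq_bigr => j.
  rewrite mem_Phi_idx => /andP [Hj _].
  rewrite -[Z in y ^+ Z](subnK Hj) exprD.
  transitivity (X ^+ ((2 * h - j) * k) * (g * y) ^+ j * y ^+ (2 * h - j)).
    by rewrite exprMn; move: (X ^+ ((2 * h - j) * k)) (g ^+ j) (y ^+ j) (y ^+ (2 * h - j)) => a b c e; ring.
  rewrite gy -exprM -exprD; congr (X ^+ _ * _); nia.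
split => H.
  by apply: (@XnK (2 * h * k)); rewrite -L H -mulrA R mulrCA.
by apply: (fmulK (fexp_neq0 (2 * h) Hy)); rewrite L -mulrA R H mulrCA.
Qed.

Unset Implicit Arguments. Set Strict Implicit.

Theorem proposition4p10 (h : nat) (w : algC) :
  (0 < h)%N -> h.-primitive_root w ->
  exists U : fps,
      U 0%N = 0 /\ U 1%N = 1 /\ laurent_root h h 0 U /\
      (forall (d k : nat) (g : fps), (0 < d)%N -> laurent_root h (h * d) k g ->
         (forall n, (n < k + d)%N -> g n = 0) -> g (k + d)%N = 1 ->
         g = fps_mul (fps_Xn k) (fps_subst 1 d U)) /\
      (forall m : nat, (0 < m)%N -> forall n : nat,
         fps_pow U m n =
         if n == 0%N then 0
         else (m%:R / n%:R) * binom_star h (n%:R / h%:R) (n%:Z - m%:Z)) /\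
      (forall (d k : nat) (g : fps), (0 < d)%N ->
         (laurent_root h (h * d) k g /\ laurent_small k g) <->
         (exists2 i : nat, (i < h)%N &
            g = fps_mul (fps_Xn k) (fps_subst (w ^+ i) d U))) /\
      (forall (d k : nat) (g : fps), (0 < d)%N ->
         (laurent_root h (h * d) k g /\ laurent_large k g) <->
         (exists2 i : nat, (i < h)%N &
            fps_mul g (fps_subst (w ^+ i) d U) = fps_Xn k)).
Proof.
move=> hp pw; exists (U h).
have Sw : forall i, (w ^+ i) ^+ h = 1.
  by move=> i; rewrite exprAC (prim_expr_order pw) expr1n.
split; first exact: U0.
split; first exact: U1.
split.
  have := (shift_root h h 0 (U h)).2; rewrite expr0 mul1r; apply.
  by have := U_eqn hp; rewrite /Eqn muln1.
split.
  move=> d k g dp Hr Hv H1.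
  have Vk : vanish g k by move=> n Hn; apply: Hv; apply: leq_trans Hn (leq_addr _ _).
  move: Hr; rewrite (shiftE Vk) => Hr.
  have Ey : Eqn h d (shift g k) by apply/(shift_root h (h * d) k).
  have [V2 C2] := subst_vanish 1 dp (U0 hp).
  have E : shift g k = fps_subst 1 d (U h).
    apply: (@uniq_root h d 1) => //.
    - by rewrite oner_eq0.
    - by move=> n Hn; rewrite /shift Hv // addnC ltn_add2l.
    - by rewrite /shift addnC.
    - by rewrite C2 U1 // mulr1.
    - by apply: subst_eqn => //; rewrite expr1n.
  by rewrite E XnE.
split.
  move=> m mp n; rewrite fps_powE (U_pow m hp) Lag //.
  case: (eqVneq n 0%N) => [->|nn]; first by rewrite mp.
  case: ltnP => Hnm.
    have -> : (n%:Z - m%:Z) = Negz (m - n).-1.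
      rewrite NegzE prednK ?subn_gt0 // -subzn; [by rewrite opprB | exact: ltnW].
    by rewrite /= mulr0.
  rewrite subzn // phi_exp // compE ?qq0 // mulrC; congr (_ * _).
  by apply: eq_bigr => j _; rewrite fps_powE.
split.
  move=> d k g dp; split.
    move=> [Hr Hs].
    have Vk : vanish g k by move=> n Hn; apply: Hs; apply: ltnW.
    move: Hr; rewrite (shiftE Vk) => Hr.
    have Ey : Eqn h d (shift g k) by apply/(shift_root h (h * d) k).
    have [i Hi Hy] := small_root hp dp pw (Hs k (leqnn k)) Ey.
    by exists i => //; rewrite Hy XnE.
  move=> [i Hi ->].
  have [V2 C2] := subst_vanish (w ^+ i) dp (U0 hp).
  have -> : fps_mul (fps_Xn k) (fps_subst (w ^+ i) d (U h)) =
            X ^+ k * fps_subst (w ^+ i) d (U h) by rewrite XnE.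
  split.
    by apply/(shift_root h (h * d) k); apply: subst_eqn.
  move=> n Hn; rewrite XnM; case: ltnP => // Hkn.
  have -> : (n - k)%N = 0%N by apply/eqP; rewrite subn_eq0.
  by apply: V2.
move=> d k g dp; split.
  move=> [Hr [n Hn Hgn]].
  have Hg : (g : F) != 0 by apply/eqP => G; move: Hgn; rewrite G zeroE eqxx.
  have [r [Vr Gr]] := nonzero_val Hg.
  have Hrn : (r <= n)%N by rewrite leqNgt; apply/negP => Hnr; move: Hgn; rewrite Vr // eqxx.
  have Hrk : (r < k)%N by apply: leq_ltn_trans Hn.
  set gt := shift g r.
  have gt0 : gt 0%N != 0 by rewrite /gt /shift add0n.
  set y : F := X ^+ (k - r) * sinv gt.
  have gy : (g : F) * y = X ^+ k.
    rewrite {1}(shiftE Vr) /y -/gt.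
    have -> : X ^+ r * gt * (X ^+ (k - r) * sinv gt) = X ^+ r * X ^+ (k - r) * (gt * sinv gt).
      by rewrite mulrACA.
    by rewrite sinvE // mulr1 -exprD subnKC // ltnW.
  have y0 : y 0%N = 0 by rewrite /y XnM subn_gt0 Hrk.
  have Ey : Eqn h d y by apply/(inv_root h (h * d) gy).
  have [i Hi Hy] := small_root hp dp pw y0 Ey.
  exists i => //; rewrite -Hy XnE; exact: gy.
move=> [i Hi Hgy].
have gy : (g : F) * fps_subst (w ^+ i) d (U h) = X ^+ k by rewrite -XnE -Hgy.
have [V2 C2] := subst_vanish (w ^+ i) dp (U0 hp).
split.
  by apply/(inv_root h (h * d) gy); apply: subst_eqn.
case: (pselect (laurent_large k g)) => // H; exfalso.
have Vk : vanish g k.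
  move=> n Hn; apply/eqP; apply/negPn/negP => Hgn; apply: H; by exists n.
move: gy; rewrite (shiftE Vk) -mulrA -{2}(mulr1 (X ^+ k)) => /XnK E.
have := congr1 (fun f : F => f 0%N) E; rewrite /= mulE' big_ord1 V2 // mulr0 oneE.
by move/eqP; rewrite eq_sym oner_eq0.
Qed.
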